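(* Let $(f,g),(f',g')\in\Theta$ both be $\tau$-lower bounded for some $\tau>0$. Then $$d_{\mathrm{logit}}^2(p_{f,g},p_{f',g'})\le 2|\log\tau|\;\mathcal L^1_{\mathrm{logit}}(p_{f,g},p_{f',g'}),\qquad\text{where }\ \mathcal L^1_{\mathrm{logit}}(p_{f,g},p_{f',g'})=\mathbb E_{x\sim p_x}\|u(x)-u'(x)\|_1.$$
   Context: Model class $\Theta$: pairs $(f,g)$, $f:\mathcal X\to\mathbb R^m$, $g:\mathcal Y\to\mathbb R^m$, $\mathcal Y$ finite with $k$ labels, $\sum_y g(y)=0$, inducing $p_{f,g}(y\mid x)\propto\exp(f(x)^\top g(y))$; $p_x$ is the data distribution. Logits $u(x)=(f(x)^\top g(y))_{y\in\mathcal Y}$; $d_{\mathrm{logit}}^2=\mathbb E_{x\sim p_x}\|u(x)-u'(x)\|_2^2$. $\tau$-lower bounded: $\min_y p_{f,g}(y\mid x)\ge\tau$ for $p_x$-a.e. $x$. (The two models may have different representation dimensions.) *)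

(* Defs.v *)
From HB Require Import structures.
From mathcomp Require Import all_boot all_order all_algebra.
From mathcomp Require Import all_classical all_reals all_analysis.
Set Implicit Arguments. Unset Strict Implicit. Unset Printing Implicit Defensive.
Import Order.TTheory GRing.Theory Num.Theory.
Local Open Scope ring_scope.

(* A model (f,g) with representation dimension m:
   f : X -> R^m is encoded as X -> 'I_m -> R, g : Y -> R^m as Y -> 'I_m -> R. *)

(* Membership in Theta: g is centered, sum_y g(y) = 0 (coordinatewise). *)
Definition centered (R : realType) (Y : finType) (m : nat)
  (g : Y -> 'I_m -> R) : Prop :=
  forall i : 'I_m, \sum_(y : Y) g y i = 0.

Definition logit (R : realType) (X : Type) (Y : finType) (m : nat)
  (f : X -> 'I_m -> R) (g : Y -> 'I_m -> R) (x : X) (y : Y) : R :=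
  \sum_(i < m) f x i * g y i.

Definition pmodel (R : realType) (X : Type) (Y : finType) (m : nat)
  (f : X -> 'I_m -> R) (g : Y -> 'I_m -> R) (x : X) (y : Y) : R :=
  expR (logit f g x y) / \sum_(z : Y) expR (logit f g x z).

Definition tau_lower_bounded (d : measure_display) (R : realType)
  (X : measurableType d) (P : probability X R) (Y : finType) (m : nat)
  (f : X -> 'I_m -> R) (g : Y -> 'I_m -> R) (tau : R) : Prop :=
  {ae P, forall x, forall y : Y, tau <= pmodel f g x y}.

Definition d_logit2 (d : measure_display) (R : realType)
  (X : measurableType d) (P : probability X R) (Y : finType) (m m' : nat)
  (f : X -> 'I_m -> R) (g : Y -> 'I_m -> R)
  (f' : X -> 'I_m' -> R) (g' : Y -> 'I_m' -> R) : \bar R :=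
  (\int[P]_x (\sum_(y : Y) (logit f g x y - logit f' g' x y) ^+ 2)%:E)%E.

Definition L1_logit (d : measure_display) (R : realType)
  (X : measurableType d) (P : probability X R) (Y : finType) (m m' : nat)
  (f : X -> 'I_m -> R) (g : Y -> 'I_m -> R)
  (f' : X -> 'I_m' -> R) (g' : Y -> 'I_m' -> R) : \bar R :=
  (\int[P]_x (\sum_(y : Y) `|logit f g x y - logit f' g' x y|)%:E)%E.

(* Main.v *)
Require Import Defs.
From HB Require Import structures.
From mathcomp Require Import all_boot all_order all_algebra.
From mathcomp Require Import all_classical all_reals all_analysis.
Import Order.TTheory GRing.Theory Num.Theory.
Local Open Scope ring_scope.

Lemma diff_bound (R : realType) (Y : finType) (u : Y -> R) (tau : R) :
  0 < tau -> (forall y, tau <= expR (u y) / \sum_z expR (u z)) ->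
  forall y z, ln tau <= u y - u z.
Proof.
move=> t0 H y z.
have Sz : expR (u z) <= \sum_z expR (u z).
  by rewrite (bigD1 z) //= lerDl sumr_ge0 // => i _; exact: expR_ge0.
have S0 : 0 < \sum_z expR (u z) by apply: lt_le_trans Sz; exact: expR_gt0.
have : tau <= expR (u y - u z).
  apply: (le_trans (H y)); rewrite expRB.
  by apply: ler_wpM2l; [exact: expR_ge0| rewrite lef_pV2 ?posrE ?expR_gt0].
move=> h; rewrite -[u y - u z]expRK ler_ln ?posrE ?expR_gt0 //.
Qed.
Lemma abs_bound (R : realType) (Y : finType) (u : Y -> R) (tau : R) :
  0 < tau -> \sum_z u z = 0 -> (forall y, tau <= expR (u y) / \sum_z expR (u z)) ->
  forall y, `|u y| <= `|ln tau|.
Proof.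
move=> t0 s0 H y.
have D := @diff_bound _ _ u _ t0 H.
have k0 : (0 < #|Y|)%N by apply/card_gt0P; exists y.
have E : \sum_z (u y - u z) = #|Y|%:R * u y.
  by rewrite sumrB s0 subr0 sumr_const mulr_natl.
have kR : 0 < (#|Y|%:R : R) by rewrite ltr0n.
have L1 : #|Y|%:R * ln tau <= #|Y|%:R * u y.
  rewrite -E; have -> : #|Y|%:R * ln tau = \sum_(z : Y) ln tau by rewrite sumr_const mulr_natl.
  apply: ler_sum => z _; exact: D.
have L2 : #|Y|%:R * u y <= #|Y|%:R * - ln tau.
  rewrite -E; have -> : #|Y|%:R * - ln tau = \sum_(z : Y) - ln tau by rewrite sumr_const mulr_natl.
  apply: ler_sum => z _.
  by rewrite lerNr opprB; exact: D.
rewrite ler_pM2l // in L1; rewrite ler_pM2l // in L2.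
rewrite ler_norml; apply/andP; split.
- by apply: le_trans L1; rewrite lerNl -normrN; exact: ler_norm.
- by apply: le_trans L2 _; rewrite -normrN; exact: ler_norm.
Qed.
Lemma logit_sum0 (R : realType) (X : Type) (Y : finType) (m : nat)
  (f : X -> 'I_m -> R) (g : Y -> 'I_m -> R) x :
  centered g -> \sum_y logit f g x y = 0.
Proof.
move=> cg; rewrite /logit exchange_big /=.
by apply: big1 => i _; rewrite -mulr_sumr cg mulr0.
Qed.

Lemma pointwise (R : realType) (Y : finType) (u v : Y -> R) (tau : R) :
  0 < tau -> \sum_z u z = 0 -> \sum_z v z = 0 ->
  (forall y, tau <= expR (u y) / \sum_z expR (u z)) ->
  (forall y, tau <= expR (v y) / \sum_z expR (v z)) ->
  \sum_y (u y - v y) ^+ 2 <= (2 * `|ln tau|) * \sum_y `|u y - v y|.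
Proof.
move=> t0 su sv Hu Hv; rewrite mulr_sumr; apply: ler_sum => y _.
rewrite -real_normK ?num_real // expr2 ler_wpM2r //.
apply: (le_trans (ler_normB _ _)); rewrite mulr2n mulrDl mul1r.
by apply: lerD; apply: abs_bound.
Qed.

Theorem mainTheorem8 (d : measure_display) (R : realType)
  (X : measurableType d) (P : probability X R) (Y : finType) (m m' : nat)
  (f : X -> 'I_m -> R) (g : Y -> 'I_m -> R)
  (f' : X -> 'I_m' -> R) (g' : Y -> 'I_m' -> R) (tau : R) :
  (forall i : 'I_m, measurable_fun setT (fun x => f x i)) ->
  (forall i : 'I_m', measurable_fun setT (fun x => f' x i)) ->
  centered g -> centered g' ->
  0 < tau ->
  tau_lower_bounded P f g tau -> tau_lower_bounded P f' g' tau ->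
  (d_logit2 P f g f' g' <= (2 * `|ln tau|)%:E * L1_logit P f g f' g')%E.
Proof.
move=> mf mf' cg cg' t0 Hl Hl'.
have mU y : measurable_fun setT (fun x => logit f g x y).
  by apply: measurable_sum => i; apply: measurable_realfun.measurable_funM => //; exact: measurable_cst.
have mV y : measurable_fun setT (fun x => logit f' g' x y).
  by apply: measurable_sum => i; apply: measurable_realfun.measurable_funM => //; exact: measurable_cst.
have mD y : measurable_fun setT (fun x => logit f g x y - logit f' g' x y).
  exact: measurable_realfun.measurable_funB.
rewrite /d_logit2 /L1_logit.
have c0 : (0 <= 2 * `|ln tau|)%R by rewrite mulr_ge0.
rewrite -ge0_integralZl_EFin //; last first.
- by apply/measurable_realfun.measurable_EFinP; apply: measurable_sum => y; apply: measurableT_comp => //; exact: measurable_realfun.normr_measurable.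
- by move=> x _; rewrite lee_fin sumr_ge0.
apply: ae_ge0_le_integral => //.
- by move=> x _; rewrite lee_fin sumr_ge0 // => y _; exact: sqr_ge0.
- by apply/measurable_realfun.measurable_EFinP; apply: measurable_sum => y; exact: measurable_realfun.measurable_funX.
- by move=> x _; rewrite -EFinM lee_fin mulr_ge0 // sumr_ge0.
- apply/measurable_realfun.measurable_EFinP; apply: measurable_realfun.measurable_funM; first exact: measurable_cst.
  by apply: measurable_sum => y; apply: measurableT_comp => //; exact: measurable_realfun.normr_measurable.
apply: filterS2 Hl Hl' => x h1 h2 _.
rewrite -EFinM lee_fin; apply: pointwise t0 _ _ h1 h2; exact: logit_sum0.
Qed.
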